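(* Let $a_1,a_2,a_3,a_4,n,m$ be integers such that the eight numbers $a_1,a_2,a_3,a_4,n-a_1,n-a_2,n-a_3,n-a_4$ are pairwise distinct and no three distinct ones among them form a $3$-term arithmetic progression (i.e. there are no three distinct elements $u,v,w$ of this set with $u+v=2w$). Let $x_1,\dots,x_6$ be integers such that the multisets $$A=\{a_i+a_j+m,\ 2n-(a_i+a_j)+m\ :\ 1\le i\le j\le 4\}$$ and $$B=\{x_i+x_j+x_k\ :\ 1\le i<j<k\le 6\}$$ are equal (both have $20$ elements, counted with multiplicity). Then $x_1,\dots,x_6$ are pairwise distinct. *)

(* Defs.v *)
From mathcomp Require Import all_boot all_order all_algebra.
Set Implicit Arguments. Unset Strict Implicit. Unset Printing Implicit Defensive.
Import Order.TTheory GRing.Theory Num.Theory.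
Local Open Scope ring_scope.

Definition pairs4 : seq ('I_4 * 'I_4) :=
  [seq p <- enum {: 'I_4 * 'I_4} | (nat_of_ord p.1 <= nat_of_ord p.2)%N].

Definition triples6 : seq ('I_6 * 'I_6 * 'I_6) :=
  [seq t <- enum {: 'I_6 * 'I_6 * 'I_6}
     | (nat_of_ord t.1.1 < nat_of_ord t.1.2)%N && (nat_of_ord t.1.2 < nat_of_ord t.2)%N].

Definition eight (a : 'I_4 -> int) (n : int) : seq int :=
  [seq a i | i <- enum 'I_4] ++ [seq n - a i | i <- enum 'I_4].

Definition no3AP (s : seq int) : Prop :=
  forall u v w, u \in s -> v \in s -> w \in s ->
    u != v -> v != w -> u != w -> u + v != 2 * w.

Definition multA (a : 'I_4 -> int) (n m : int) : seq int :=
  [seq a p.1 + a p.2 + m | p <- pairs4]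
  ++ [seq 2 * n - (a p.1 + a p.2) + m | p <- pairs4].

Definition multB (x : 'I_6 -> int) : seq int :=
  [seq x t.1.1 + x t.1.2 + x t.2 | t <- triples6].

(* Main.v *)
Require Import Defs.
From mathcomp Require Import all_boot all_order all_algebra.
From mathcomp Require Import zify ring.
Import Order.TTheory GRing.Theory Num.Theory.
Local Open Scope ring_scope.

Lemma perm_idx (l r : seq int) (idx : seq nat) :
  perm_eq (iota 0 (size l)) idx -> r = map (nth 0 l) idx -> perm_eq l r.
Proof.
move=> H ->; rewrite -{1}(mkseq_nth 0 l) /mkseq.
exact: perm_map.
Qed.

Lemma uniq_nth_neq (s : seq int) (i j : nat) :
  uniq s -> (i < size s)%N -> (j < size s)%N -> (i != j)%N -> nth 0 s i <> nth 0 s j.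
Proof. by move=> Hu Hi Hj Hij /eqP; rewrite nth_uniq //; apply/negP. Qed.

Lemma split_perm (T E L U : seq int) :
  uniq T -> (forall e, e \in E -> e \notin T) -> size L = size T ->
  perm_eq (T ++ E) (L ++ U ++ U) ->
  [/\ (forall u, u \in U -> u \notin T), all (mem T) L, perm_eq T L & perm_eq E (U ++ U)].
Proof.
move=> uT ET sLT H.
have HU : forall u, u \in U -> u \notin T.
  move=> u uU; apply/negP => uinT.
  have := permP H (pred1 u); rewrite !count_cat.
  have -> : count (pred1 u) T = 1%N by rewrite (count_uniq_mem _ uT) uinT.
  have -> : count (pred1 u) E = 0%N.
    apply/count_memPn; apply/negP => uE; by move: (ET _ uE); rewrite uinT.
  have : (0 < count (pred1 u) U)%N by rewrite -has_count has_pred1.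
  lia.
have cE : count (mem T) E = 0%N.
  apply/eqP; rewrite -leqn0 leqNgt -has_count; apply/hasPn => e eE; exact: ET.
have cU : count (mem T) U = 0%N.
  apply/eqP; rewrite -leqn0 leqNgt -has_count; apply/hasPn => e eE; exact: HU.
have HL : all (mem T) L.
  have := permP H (mem T); rewrite !count_cat cE cU.
  have -> : count (mem T) T = size T by apply/eqP; rewrite -all_count; apply/allP.
  by rewrite all_count sLT !addn0 => ->.
have fE : [seq x <- E | mem T x] = [::].
  by rewrite -(filter_pred0 E); apply: eq_in_filter => e /ET /negbTE.
have fU : [seq x <- U | mem T x] = [::].
  by rewrite -(filter_pred0 U); apply: eq_in_filter => e /HU /negbTE.
have fE' : [seq x <- E | predC (mem T) x] = E.
  by apply/all_filterP/allP => e /ET.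
have fU' : [seq x <- U | predC (mem T) x] = U.
  by apply/all_filterP/allP => e /HU.
have fL : [seq x <- L | predC (mem T) x] = [::].
  by rewrite -(filter_pred0 L); apply: eq_in_filter => e /(allP HL) /= ->.
have fT : [seq x <- T | predC (mem T) x] = [::].
  by rewrite -(filter_pred0 T); apply: eq_in_filter => e /= ->.
split => //.
- have := perm_filter (mem T) H; rewrite !filter_cat fE fU !cats0.
  by rewrite (all_filterP HL) (_ : [seq x <- T | mem T x] = T) //; apply/all_filterP/allP.
- have := perm_filter (predC (mem T)) H; rewrite !filter_cat fE' fU' fL fT.
  by [].
Qed.
Lemma cons_eq (x y : int) (s t : seq int) : x = y -> s = t -> x :: s = y :: t.
Proof. by move=> -> ->. Qed.

Lemma cnt_head (e : int) (R U : seq int) :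
  count (pred1 e) (e :: R) = (count (pred1 e) U + count (pred1 e) U)%N -> e \in R.
Proof. move=> H; rewrite -has_pred1 has_count; move: H => /=; rewrite eqxx add1n; lia. Qed.

Lemma cnt_head2 (e f : int) (R U : seq int) :
  count (pred1 f) (e :: f :: R) = (count (pred1 f) U + count (pred1 f) U)%N -> e != f -> f \in R.
Proof. move=> H /negbTE Hef; rewrite -has_pred1 has_count; move: H => /=; rewrite Hef eqxx add0n add1n; lia. Qed.

Ltac ne Hu i j := exfalso; apply: (@uniq_nth_neq _ i j Hu isT isT isT); match goal with |- nth _ ?S _ = _ => rewrite /S /=; lia end.

Lemma core (a0 a1 a2 a3 n m y z2 z3 z4 z5 : int) :
  uniq [:: a0; a1; a2; a3; n - a0; n - a1; n - a2; n - a3] ->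
  (forall u v w, u \in [:: a0; a1; a2; a3; n - a0; n - a1; n - a2; n - a3] ->
     v \in [:: a0; a1; a2; a3; n - a0; n - a1; n - a2; n - a3] ->
     w \in [:: a0; a1; a2; a3; n - a0; n - a1; n - a2; n - a3] -> u + v = 2 * w -> u = v) ->
  perm_eq ([seq 2 * v + m | v <- [:: a0; a1; a2; a3; n - a0; n - a1; n - a2; n - a3]] ++
     [:: a0+a1+m; a0+a2+m; a0+a3+m; a1+a2+m; a1+a3+m; a2+a3+m; 2*n-(a0+a1)+m; 2*n-(a0+a2)+m; 2*n-(a0+a3)+m; 2*n-(a1+a2)+m; 2*n-(a1+a3)+m; 2*n-(a2+a3)+m])
   ([:: y+y+z2; y+y+z3; y+y+z4; y+y+z5; z2+z3+z4; z2+z3+z5; z2+z4+z5; z3+z4+z5] ++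
    [:: y+z2+z3; y+z2+z4; y+z2+z5; y+z3+z4; y+z3+z5; y+z4+z5] ++
    [:: y+z2+z3; y+z2+z4; y+z2+z5; y+z3+z4; y+z3+z5; y+z4+z5]) -> False.
Proof.
set s := [:: a0; a1; a2; a3; n - a0; n - a1; n - a2; n - a3].
set E := [:: a0+a1+m; a0+a2+m; a0+a3+m; a1+a2+m; a1+a3+m; a2+a3+m; 2*n-(a0+a1)+m; 2*n-(a0+a2)+m; 2*n-(a0+a3)+m; 2*n-(a1+a2)+m; 2*n-(a1+a3)+m; 2*n-(a2+a3)+m].
set L := [:: y+y+z2; y+y+z3; y+y+z4; y+y+z5; z2+z3+z4; z2+z3+z5; z2+z4+z5; z3+z4+z5].
set U := [:: y+z2+z3; y+z2+z4; y+z2+z5; y+z3+z4; y+z3+z5; y+z4+z5].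
set T := [seq 2 * v + m | v <- s].
move=> Hu Hap HP.
have uT : uniq T by rewrite map_inj_uniq // => p q; lia.
have ET : all (fun e => e \notin T) E.
  rewrite /E /= ?andbT; repeat (apply/andP; split).

  - apply/mapP => -[v Hv Hev]; apply: (@uniq_nth_neq _ 0 1 Hu isT isT isT);
    apply: (Hap _ _ v (@mem_nth _ 0 s 0 isT) (@mem_nth _ 0 s 1 isT) Hv); rewrite /s /=; lia.
  - apply/mapP => -[v Hv Hev]; apply: (@uniq_nth_neq _ 0 2 Hu isT isT isT);
    apply: (Hap _ _ v (@mem_nth _ 0 s 0 isT) (@mem_nth _ 0 s 2 isT) Hv); rewrite /s /=; lia.
  - apply/mapP => -[v Hv Hev]; apply: (@uniq_nth_neq _ 0 3 Hu isT isT isT);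
    apply: (Hap _ _ v (@mem_nth _ 0 s 0 isT) (@mem_nth _ 0 s 3 isT) Hv); rewrite /s /=; lia.
  - apply/mapP => -[v Hv Hev]; apply: (@uniq_nth_neq _ 1 2 Hu isT isT isT);
    apply: (Hap _ _ v (@mem_nth _ 0 s 1 isT) (@mem_nth _ 0 s 2 isT) Hv); rewrite /s /=; lia.
  - apply/mapP => -[v Hv Hev]; apply: (@uniq_nth_neq _ 1 3 Hu isT isT isT);
    apply: (Hap _ _ v (@mem_nth _ 0 s 1 isT) (@mem_nth _ 0 s 3 isT) Hv); rewrite /s /=; lia.
  - apply/mapP => -[v Hv Hev]; apply: (@uniq_nth_neq _ 2 3 Hu isT isT isT);
    apply: (Hap _ _ v (@mem_nth _ 0 s 2 isT) (@mem_nth _ 0 s 3 isT) Hv); rewrite /s /=; lia.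
  - apply/mapP => -[v Hv Hev]; apply: (@uniq_nth_neq _ 4 5 Hu isT isT isT);
    apply: (Hap _ _ v (@mem_nth _ 0 s 4 isT) (@mem_nth _ 0 s 5 isT) Hv); rewrite /s /=; lia.
  - apply/mapP => -[v Hv Hev]; apply: (@uniq_nth_neq _ 4 6 Hu isT isT isT);
    apply: (Hap _ _ v (@mem_nth _ 0 s 4 isT) (@mem_nth _ 0 s 6 isT) Hv); rewrite /s /=; lia.
  - apply/mapP => -[v Hv Hev]; apply: (@uniq_nth_neq _ 4 7 Hu isT isT isT);
    apply: (Hap _ _ v (@mem_nth _ 0 s 4 isT) (@mem_nth _ 0 s 7 isT) Hv); rewrite /s /=; lia.
  - apply/mapP => -[v Hv Hev]; apply: (@uniq_nth_neq _ 5 6 Hu isT isT isT);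
    apply: (Hap _ _ v (@mem_nth _ 0 s 5 isT) (@mem_nth _ 0 s 6 isT) Hv); rewrite /s /=; lia.
  - apply/mapP => -[v Hv Hev]; apply: (@uniq_nth_neq _ 5 7 Hu isT isT isT);
    apply: (Hap _ _ v (@mem_nth _ 0 s 5 isT) (@mem_nth _ 0 s 7 isT) Hv); rewrite /s /=; lia.
  - apply/mapP => -[v Hv Hev]; apply: (@uniq_nth_neq _ 6 7 Hu isT isT isT);
    apply: (Hap _ _ v (@mem_nth _ 0 s 6 isT) (@mem_nth _ 0 s 7 isT) Hv); rewrite /s /=; lia.
have [HUT HLT HTL HEU] := @split_perm T E L U uT (fun e He => allP ET e He) erefl HP.
have cnt : forall e, count (pred1 e) E = (count (pred1 e) U + count (pred1 e) U)%N.
  by move=> e; rewrite (permP HEU) count_cat.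

have H1 : a0 + a1 = a2 + a3 \/ a0 + a1 + a2 + a3 = 2 * n.
  have : (a0+a1+m : int) \in ([:: a0+a2+m; a0+a3+m; a1+a2+m; a1+a3+m; a2+a3+m; 2*n-(a0+a1)+m; 2*n-(a0+a2)+m; 2*n-(a0+a3)+m; 2*n-(a1+a2)+m; 2*n-(a1+a3)+m; 2*n-(a2+a3)+m] : seq int).
    move: (cnt (a0+a1+m)); rewrite (_ : E = (a0+a1+m) :: [:: a0+a2+m; a0+a3+m; a1+a2+m; a1+a3+m; a2+a3+m; 2*n-(a0+a1)+m; 2*n-(a0+a2)+m; 2*n-(a0+a3)+m; 2*n-(a1+a2)+m; 2*n-(a1+a3)+m; 2*n-(a2+a3)+m]) //; exact: cnt_head.
  rewrite !inE.
  case/orP => [/eqP H|]; first by ne Hu 1%N 2%N.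
  case/orP => [/eqP H|]; first by ne Hu 1%N 3%N.
  case/orP => [/eqP H|]; first by ne Hu 0%N 2%N.
  case/orP => [/eqP H|]; first by ne Hu 0%N 3%N.
  case/orP => [/eqP H|]; first by left; lia.
  case/orP => [/eqP H|]; first by ne Hu 1%N 4%N.
  case/orP => [/eqP H|]; first by exfalso; apply: (@uniq_nth_neq _ 1 2 Hu isT isT isT); apply: (Hap _ _ (nth 0 s 4) (@mem_nth _ 0 s 1 isT) (@mem_nth _ 0 s 2 isT) (@mem_nth _ 0 s 4 isT)); rewrite /s /=; lia.
  case/orP => [/eqP H|]; first by exfalso; apply: (@uniq_nth_neq _ 1 3 Hu isT isT isT); apply: (Hap _ _ (nth 0 s 4) (@mem_nth _ 0 s 1 isT) (@mem_nth _ 0 s 3 isT) (@mem_nth _ 0 s 4 isT)); rewrite /s /=; lia.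
  case/orP => [/eqP H|]; first by exfalso; apply: (@uniq_nth_neq _ 0 2 Hu isT isT isT); apply: (Hap _ _ (nth 0 s 5) (@mem_nth _ 0 s 0 isT) (@mem_nth _ 0 s 2 isT) (@mem_nth _ 0 s 5 isT)); rewrite /s /=; lia.
  case/orP => [/eqP H|]; first by exfalso; apply: (@uniq_nth_neq _ 0 3 Hu isT isT isT); apply: (Hap _ _ (nth 0 s 5) (@mem_nth _ 0 s 0 isT) (@mem_nth _ 0 s 3 isT) (@mem_nth _ 0 s 5 isT)); rewrite /s /=; lia.
  move/eqP => H; by right; lia.
have H2 : a0 + a2 = a1 + a3 \/ a0 + a1 + a2 + a3 = 2 * n.
  have : (a0+a2+m : int) \in ([:: a0+a3+m; a1+a2+m; a1+a3+m; a2+a3+m; 2*n-(a0+a1)+m; 2*n-(a0+a2)+m; 2*n-(a0+a3)+m; 2*n-(a1+a2)+m; 2*n-(a1+a3)+m; 2*n-(a2+a3)+m] : seq int).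
    move: (cnt (a0+a2+m)); rewrite (_ : E = (a0+a1+m) :: (a0+a2+m) :: [:: a0+a3+m; a1+a2+m; a1+a3+m; a2+a3+m; 2*n-(a0+a1)+m; 2*n-(a0+a2)+m; 2*n-(a0+a3)+m; 2*n-(a1+a2)+m; 2*n-(a1+a3)+m; 2*n-(a2+a3)+m]) // => /cnt_head2; apply.
    by apply/eqP => H; ne Hu 1%N 2%N.
  rewrite !inE.
  case/orP => [/eqP H|]; first by ne Hu 2%N 3%N.
  case/orP => [/eqP H|]; first by ne Hu 0%N 1%N.
  case/orP => [/eqP H|]; first by left; lia.
  case/orP => [/eqP H|]; first by ne Hu 0%N 3%N.
  case/orP => [/eqP H|]; first by exfalso; apply: (@uniq_nth_neq _ 1 2 Hu isT isT isT); apply: (Hap _ _ (nth 0 s 4) (@mem_nth _ 0 s 1 isT) (@mem_nth _ 0 s 2 isT) (@mem_nth _ 0 s 4 isT)); rewrite /s /=; lia.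
  case/orP => [/eqP H|]; first by ne Hu 2%N 4%N.
  case/orP => [/eqP H|]; first by exfalso; apply: (@uniq_nth_neq _ 2 3 Hu isT isT isT); apply: (Hap _ _ (nth 0 s 4) (@mem_nth _ 0 s 2 isT) (@mem_nth _ 0 s 3 isT) (@mem_nth _ 0 s 4 isT)); rewrite /s /=; lia.
  case/orP => [/eqP H|]; first by exfalso; apply: (@uniq_nth_neq _ 0 1 Hu isT isT isT); apply: (Hap _ _ (nth 0 s 6) (@mem_nth _ 0 s 0 isT) (@mem_nth _ 0 s 1 isT) (@mem_nth _ 0 s 6 isT)); rewrite /s /=; lia.
  case/orP => [/eqP H|]; first by right; lia.
  move/eqP => H; by exfalso; apply: (@uniq_nth_neq _ 0 3 Hu isT isT isT); apply: (Hap _ _ (nth 0 s 6) (@mem_nth _ 0 s 0 isT) (@mem_nth _ 0 s 3 isT) (@mem_nth _ 0 s 6 isT)); rewrite /s /=; lia.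
have HD : a0 + a1 + a2 + a3 = 2 * n.
  by case: H1 => H1; case: H2 => H2; first [lia | exfalso; ne Hu 1%N 2%N].
clear H1 H2.

have Lin : forall l, l \in L -> exists2 t, t \in s & (l : int) = 2 * t + m.
  by move=> l /(allP HLT) /mapP [t Ht ->]; exists t.
have /Lin [t2 Ht2 E2] : y+y+z2 \in L by rewrite /L !inE eqxx /= ?orbT.
have /Lin [t3 Ht3 E3] : y+y+z3 \in L by rewrite /L !inE eqxx /= ?orbT.
have /Lin [t4 Ht4 E4] : y+y+z4 \in L by rewrite /L !inE eqxx /= ?orbT.
have /Lin [t5 Ht5 E5] : y+y+z5 \in L by rewrite /L !inE eqxx /= ?orbT.
have Hsum : y + y + z2 + z3 + z4 + z5 = 2 * (n + m).
  have HS : \sum_(v <- T ++ E) (v : int) = \sum_(v <- L ++ U ++ U) (v : int) by apply: perm_big.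
  rewrite /T /E /L /U /s /= !big_cons !big_nil in HS; clear -HS; lia.
have HTL2 : perm_eq s [:: t2; t3; t4; t5; n - t5; n - t4; n - t3; n - t2].
  apply: (@perm_map_inj _ _ (fun v : int => 2 * v + m)); first by move=> p q /= Hpq; clear -Hpq; lia.
  suff HH : [seq 2 * v + m | v <- [:: t2; t3; t4; t5; n - t5; n - t4; n - t3; n - t2]] = L.
    by rewrite HH; exact: HTL.
  rewrite /L /=; repeat (apply: cons_eq; first by clear -E2 E3 E4 E5 Hsum; lia); done.
pose A := [:: a0; a1; a2; a3].
have hs : s = A ++ [seq n - v | v <- A] by [].
have AC : forall v, v \in A -> n - v \notin A.
  move=> v vA; move: Hu; rewrite hs cat_uniq => /and3P[_ /hasPn H _].
  exact: H (map_f _ vA).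
pose g v := if v \in A then v else 0.
pose f v := if v \in A then v else n - v.
have Asum : forall v, v \in s -> g v + g (n - v) = f v.
  move=> v; rewrite hs mem_cat /g /f; case vA: (v \in A).
  - by move=> _; rewrite /= (negbTE (AC _ vA)) addr0.
  - rewrite orFb => /mapP [w wA Hv]; subst v; rewrite /=.
    rewrite (_ : n - (n - w) = w); last by clear; lia.
    by rewrite wA add0r.
have HG : \sum_(v <- s) g v = \sum_(v <- [:: t2; t3; t4; t5; n - t5; n - t4; n - t3; n - t2]) g v.
  exact: perm_big.
have HA : \sum_(v <- s) g v = a0 + a1 + a2 + a3.
  have mA0 : a0 \in A by rewrite !inE eqxx.
  have mA1 : a1 \in A by rewrite !inE eqxx /= ?orbT.
  have mA2 : a2 \in A by rewrite !inE eqxx /= ?orbT.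
  have mA3 : a3 \in A by rewrite !inE eqxx /= ?orbT.
  rewrite /s !big_cons big_nil /g mA0 mA1 mA2 mA3 (negbTE (AC _ mA0)) (negbTE (AC _ mA1)).
  rewrite (negbTE (AC _ mA2)) (negbTE (AC _ mA3)); clear; lia.
have HF : f t2 + f t3 + f t4 + f t5 = a0 + a1 + a2 + a3.
  rewrite -HA HG !big_cons big_nil -(Asum _ Ht2) -(Asum _ Ht3) -(Asum _ Ht4) -(Asum _ Ht5).
  clear; lia.
rewrite /f in HF.
have HUE : forall u, u \in U -> u \in E by move=> u uU; rewrite (perm_mem HEU) mem_cat uU.
have Hnm : all (fun e : int => e != n + m) E.
  rewrite /E /= ?andbT; repeat (apply/andP; split).
  - by apply/eqP => H; exfalso; apply: (@uniq_nth_neq _ 1 4 Hu isT isT isT); rewrite /s /=; clear -H; lia.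
  - by apply/eqP => H; exfalso; apply: (@uniq_nth_neq _ 2 4 Hu isT isT isT); rewrite /s /=; clear -H; lia.
  - by apply/eqP => H; exfalso; apply: (@uniq_nth_neq _ 3 4 Hu isT isT isT); rewrite /s /=; clear -H; lia.
  - by apply/eqP => H; exfalso; apply: (@uniq_nth_neq _ 2 5 Hu isT isT isT); rewrite /s /=; clear -H; lia.
  - by apply/eqP => H; exfalso; apply: (@uniq_nth_neq _ 3 5 Hu isT isT isT); rewrite /s /=; clear -H; lia.
  - by apply/eqP => H; exfalso; apply: (@uniq_nth_neq _ 3 6 Hu isT isT isT); rewrite /s /=; clear -H; lia.
  - by apply/eqP => H; exfalso; apply: (@uniq_nth_neq _ 1 4 Hu isT isT isT); rewrite /s /=; clear -H; lia.
  - by apply/eqP => H; exfalso; apply: (@uniq_nth_neq _ 2 4 Hu isT isT isT); rewrite /s /=; clear -H; lia.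
  - by apply/eqP => H; exfalso; apply: (@uniq_nth_neq _ 3 4 Hu isT isT isT); rewrite /s /=; clear -H; lia.
  - by apply/eqP => H; exfalso; apply: (@uniq_nth_neq _ 2 5 Hu isT isT isT); rewrite /s /=; clear -H; lia.
  - by apply/eqP => H; exfalso; apply: (@uniq_nth_neq _ 3 5 Hu isT isT isT); rewrite /s /=; clear -H; lia.
  - by apply/eqP => H; exfalso; apply: (@uniq_nth_neq _ 3 6 Hu isT isT isT); rewrite /s /=; clear -H; lia.
have Hconst : t2 + t3 + t4 + t5 = 2 * n -> False.
  move=> Ht.
  have SQ1 : \sum_(v <- E) (v - (n+m)) * (v - (n+m)) = \sum_(v <- U ++ U) (v - (n+m)) * (v - (n+m)).
    by apply: perm_big.
  have SQ2 : \sum_(v <- s) (2*v - n) * (2*v - n) =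
     \sum_(v <- [:: t2; t3; t4; t5; n - t5; n - t4; n - t3; n - t2]) (2*v - n) * (2*v - n).
    by apply: perm_big.
  rewrite /E /U /= !big_cons !big_nil in SQ1.
  rewrite /s !big_cons !big_nil in SQ2.
  have h23 : y + z2 + z3 - (n + m) = 2 * (t2 + t3) - 2 * n by clear -E2 E3 E4 E5 Hsum Ht; lia.
  have h24 : y + z2 + z4 - (n + m) = 2 * (t2 + t4) - 2 * n by clear -E2 E3 E4 E5 Hsum Ht; lia.
  have h25 : y + z2 + z5 - (n + m) = 2 * (t2 + t5) - 2 * n by clear -E2 E3 E4 E5 Hsum Ht; lia.
  have h34 : y + z3 + z4 - (n + m) = 2 * (t3 + t4) - 2 * n by clear -E2 E3 E4 E5 Hsum Ht; lia.
  have h35 : y + z3 + z5 - (n + m) = 2 * (t3 + t5) - 2 * n by clear -E2 E3 E4 E5 Hsum Ht; lia.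
  have h45 : y + z4 + z5 - (n + m) = 2 * (t4 + t5) - 2 * n by clear -E2 E3 E4 E5 Hsum Ht; lia.
  rewrite h23 h24 h25 h34 h35 h45 in SQ1.
  have ha3 : a3 = 2 * n - a0 - a1 - a2 by clear -HD; lia.
  have ht5 : t5 = 2 * n - t2 - t3 - t4 by clear -Ht; lia.
  rewrite ha3 ht5 in SQ1 SQ2.
  have Hz : (2*a0 - n) * (2*a0 - n) + (2*a1 - n) * (2*a1 - n) + (2*a2 - n) * (2*a2 - n) +
     (2*(2*n-a0-a1-a2) - n) * (2*(2*n-a0-a1-a2) - n) = 0 by clear -SQ1 SQ2; lia.
  have hY : 0 <= (2*a1 - n) * (2*a1 - n) by rewrite -expr2 sqr_ge0.
  have hZ : 0 <= (2*a2 - n) * (2*a2 - n) by rewrite -expr2 sqr_ge0.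
  have hW : 0 <= (2*(2*n-a0-a1-a2) - n) * (2*(2*n-a0-a1-a2) - n) by rewrite -expr2 sqr_ge0.
  have hX0 : 0 <= (2*a0 - n) * (2*a0 - n) by rewrite -expr2 sqr_ge0.
  have hX : (2*a0 - n) * (2*a0 - n) = 0 by clear -Hz hY hZ hW hX0; lia.
  have /eqP := hX; rewrite mulf_eq0 orbb => /eqP H0.
  exfalso; apply: (@uniq_nth_neq _ 0 4 Hu isT isT isT); rewrite /s /=; clear -H0; lia.
case A2 : (t2 \in A) in HF; case A3 : (t3 \in A) in HF; case A4 : (t4 \in A) in HF; case A5 : (t5 \in A) in HF.
- by apply: Hconst; clear -HF HD; lia.
- have /HUT HH : y+z2+z5 \in U by rewrite /U !inE eqxx /= ?orbT.
  move: HH; rewrite (_ : y+z2+z5 = 2*t2+m); last by clear -E2 E3 E4 E5 Hsum HF HD; lia.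
  move/negP; apply; exact: (map_f (fun v : int => 2 * v + m) Ht2).
- have /HUT HH : y+z2+z4 \in U by rewrite /U !inE eqxx /= ?orbT.
  move: HH; rewrite (_ : y+z2+z4 = 2*t2+m); last by clear -E2 E3 E4 E5 Hsum HF HD; lia.
  move/negP; apply; exact: (map_f (fun v : int => 2 * v + m) Ht2).
- have /HUE /(allP Hnm) HH : y+z4+z5 \in U by rewrite /U !inE eqxx /= ?orbT.
  move: HH; rewrite (_ : y+z4+z5 = n + m); last by clear -E2 E3 E4 E5 Hsum HF HD; lia.
  by rewrite eqxx.
- have /HUT HH : y+z2+z3 \in U by rewrite /U !inE eqxx /= ?orbT.
  move: HH; rewrite (_ : y+z2+z3 = 2*t2+m); last by clear -E2 E3 E4 E5 Hsum HF HD; lia.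
  move/negP; apply; exact: (map_f (fun v : int => 2 * v + m) Ht2).
- have /HUE /(allP Hnm) HH : y+z3+z5 \in U by rewrite /U !inE eqxx /= ?orbT.
  move: HH; rewrite (_ : y+z3+z5 = n + m); last by clear -E2 E3 E4 E5 Hsum HF HD; lia.
  by rewrite eqxx.
- have /HUE /(allP Hnm) HH : y+z3+z4 \in U by rewrite /U !inE eqxx /= ?orbT.
  move: HH; rewrite (_ : y+z3+z4 = n + m); last by clear -E2 E3 E4 E5 Hsum HF HD; lia.
  by rewrite eqxx.
- have /HUT HH : y+z2+z3 \in U by rewrite /U !inE eqxx /= ?orbT.
  move: HH; rewrite (_ : y+z2+z3 = 2*t3+m); last by clear -E2 E3 E4 E5 Hsum HF HD; lia.
  move/negP; apply; exact: (map_f (fun v : int => 2 * v + m) Ht3).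
- have /HUT HH : y+z2+z3 \in U by rewrite /U !inE eqxx /= ?orbT.
  move: HH; rewrite (_ : y+z2+z3 = 2*t3+m); last by clear -E2 E3 E4 E5 Hsum HF HD; lia.
  move/negP; apply; exact: (map_f (fun v : int => 2 * v + m) Ht3).
- have /HUE /(allP Hnm) HH : y+z2+z5 \in U by rewrite /U !inE eqxx /= ?orbT.
  move: HH; rewrite (_ : y+z2+z5 = n + m); last by clear -E2 E3 E4 E5 Hsum HF HD; lia.
  by rewrite eqxx.
- have /HUE /(allP Hnm) HH : y+z2+z4 \in U by rewrite /U !inE eqxx /= ?orbT.
  move: HH; rewrite (_ : y+z2+z4 = n + m); last by clear -E2 E3 E4 E5 Hsum HF HD; lia.
  by rewrite eqxx.
- have /HUT HH : y+z2+z3 \in U by rewrite /U !inE eqxx /= ?orbT.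
  move: HH; rewrite (_ : y+z2+z3 = 2*t2+m); last by clear -E2 E3 E4 E5 Hsum HF HD; lia.
  move/negP; apply; exact: (map_f (fun v : int => 2 * v + m) Ht2).
- have /HUE /(allP Hnm) HH : y+z2+z3 \in U by rewrite /U !inE eqxx /= ?orbT.
  move: HH; rewrite (_ : y+z2+z3 = n + m); last by clear -E2 E3 E4 E5 Hsum HF HD; lia.
  by rewrite eqxx.
- have /HUT HH : y+z2+z4 \in U by rewrite /U !inE eqxx /= ?orbT.
  move: HH; rewrite (_ : y+z2+z4 = 2*t2+m); last by clear -E2 E3 E4 E5 Hsum HF HD; lia.
  move/negP; apply; exact: (map_f (fun v : int => 2 * v + m) Ht2).
- have /HUT HH : y+z2+z5 \in U by rewrite /U !inE eqxx /= ?orbT.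
  move: HH; rewrite (_ : y+z2+z5 = 2*t2+m); last by clear -E2 E3 E4 E5 Hsum HF HD; lia.
  move/negP; apply; exact: (map_f (fun v : int => 2 * v + m) Ht2).
- by apply: Hconst; clear -HF HD; lia.
Qed.
Lemma AP_of (s : seq int) : no3AP s ->
  forall u v w, u \in s -> v \in s -> w \in s -> u + v = 2 * w -> u = v.
Proof.
move=> H u v w us vs ws E; apply/eqP; apply/negPn/negP => uv.
have vw : v != w.
  apply/eqP => vw; subst v; move/eqP: uv; apply; clear -E; lia.
have uw : u != w.
  apply/eqP => uw; subst u; move/eqP: uv; apply; clear -E; lia.
by move: (H u v w us vs ws uv vw uw); rewrite E eqxx.
Qed.

Lemma enum4 : enum 'I_4 = [:: inord 0; inord 1; inord 2; inord 3].
Proof. by apply: (inj_map val_inj); rewrite val_enum_ord /= !inordK. Qed.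

Lemma enum6 : enum 'I_6 = [:: inord 0; inord 1; inord 2; inord 3; inord 4; inord 5].
Proof. by apply: (inj_map val_inj); rewrite val_enum_ord /= !inordK. Qed.

Lemma eight_eq (a : 'I_4 -> int) (n : int) :
  eight a n = [:: a (inord 0); a (inord 1); a (inord 2); a (inord 3);
                 n - a (inord 0); n - a (inord 1); n - a (inord 2); n - a (inord 3)].
Proof. by rewrite /eight enum4. Qed.

Definition val3 (t : 'I_6 * 'I_6 * 'I_6) : nat * nat * nat := (val t.1.1, val t.1.2, val t.2).
Definition NL : seq (nat * nat * nat) :=
  [:: (0,1,2); (0,1,3); (0,1,4); (0,1,5); (0,2,3); (0,2,4); (0,2,5); (0,3,4); (0,3,5); (0,4,5);
      (1,2,3); (1,2,4); (1,2,5); (1,3,4); (1,3,5); (1,4,5); (2,3,4); (2,3,5); (2,4,5); (3,4,5)]%N.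
Definition TL : seq ('I_6 * 'I_6 * 'I_6) := [seq (inord t.1.1, inord t.1.2, inord t.2) | t <- NL].

Lemma val3_inj : injective val3.
Proof. by move=> [[i j] k] [[i' j'] k'] [/val_inj -> /val_inj -> /val_inj ->]. Qed.

Lemma val3_TL : map val3 TL = NL.
Proof. by rewrite /TL /= /val3 /= !inordK. Qed.

Lemma NL_ok : all (fun i => all (fun j => all (fun k =>
   ((i, j, k) \in NL) == ((i < j) && (j < k))%N) (iota 0 6)) (iota 0 6)) (iota 0 6).
Proof. by []. Qed.

Lemma triples_perm : perm_eq triples6 TL.
Proof.
apply: uniq_perm.
- by rewrite /triples6 filter_uniq // enum_uniq.
- by rewrite -(map_inj_uniq val3_inj) val3_TL.
- move=> [[i j] k]; rewrite -[_ \in TL](mem_map val3_inj) val3_TL /triples6 mem_filter mem_enum andbT /=.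
  have := NL_ok; move/allP/(_ i); rewrite mem_iota ltn_ord => /(_ isT).
  move/allP/(_ j); rewrite mem_iota ltn_ord => /(_ isT).
  move/allP/(_ k); rewrite mem_iota ltn_ord => /(_ isT) /eqP ->.
  by [].
Qed.

Definition val2 (t : 'I_4 * 'I_4) : nat * nat := (val t.1, val t.2).
Definition NP : seq (nat * nat) :=
  [:: (0,0); (0,1); (0,2); (0,3); (1,1); (1,2); (1,3); (2,2); (2,3); (3,3)]%N.
Definition PL : seq ('I_4 * 'I_4) := [seq (inord t.1, inord t.2) | t <- NP].

Lemma val2_inj : injective val2.
Proof. by move=> [i j] [i' j'] [/val_inj -> /val_inj ->]. Qed.

Lemma val2_PL : map val2 PL = NP.
Proof. by rewrite /PL /= /val2 /= !inordK. Qed.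

Lemma NP_ok : all (fun i => all (fun j =>
   ((i, j) \in NP) == (i <= j)%N) (iota 0 4)) (iota 0 4).
Proof. by []. Qed.

Lemma pairs_perm : perm_eq pairs4 PL.
Proof.
apply: uniq_perm.
- by rewrite /pairs4 filter_uniq // enum_uniq.
- by rewrite -(map_inj_uniq val2_inj) val2_PL.
- move=> [i j]; rewrite -[_ \in PL](mem_map val2_inj) val2_PL /pairs4 mem_filter mem_enum andbT /=.
  have := NP_ok; move/allP/(_ i); rewrite mem_iota ltn_ord => /(_ isT).
  move/allP/(_ j); rewrite mem_iota ltn_ord => /(_ isT) /eqP ->.
  by [].
Qed.
Definition Bexp (x0 x1 x2 x3 x4 x5 : int) : seq int := [:: x0+x1+x2; x0+x1+x3; x0+x1+x4; x0+x1+x5; x0+x2+x3; x0+x2+x4; x0+x2+x5; x0+x3+x4; x0+x3+x5; x0+x4+x5; x1+x2+x3; x1+x2+x4; x1+x2+x5; x1+x3+x4; x1+x3+x5; x1+x4+x5; x2+x3+x4; x2+x3+x5; x2+x4+x5; x3+x4+x5].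
Lemma multA_perm (a : 'I_4 -> int) (n m : int) :
  perm_eq (multA a n m) ([seq 2 * v + m | v <- [:: a (inord 0); a (inord 1); a (inord 2); a (inord 3); n - a (inord 0); n - a (inord 1); n - a (inord 2); n - a (inord 3)]] ++ [:: a (inord 0)+a (inord 1)+m; a (inord 0)+a (inord 2)+m; a (inord 0)+a (inord 3)+m; a (inord 1)+a (inord 2)+m; a (inord 1)+a (inord 3)+m; a (inord 2)+a (inord 3)+m; 2*n-(a (inord 0)+a (inord 1))+m; 2*n-(a (inord 0)+a (inord 2))+m; 2*n-(a (inord 0)+a (inord 3))+m; 2*n-(a (inord 1)+a (inord 2))+m; 2*n-(a (inord 1)+a (inord 3))+m; 2*n-(a (inord 2)+a (inord 3))+m]).
Proof.
rewrite /multA; apply: perm_trans (perm_cat (perm_map _ pairs_perm) (perm_map _ pairs_perm)) _.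
rewrite /PL /=.
apply: (@perm_idx _ _ [:: 0;4;7;9;10;14;17;19;1;2;3;5;6;8;11;12;13;15;16;18]%N); first by [].
rewrite /=; repeat (apply: cons_eq; first by ring); done.
Qed.

Lemma multB_perm (x : 'I_6 -> int) :
  perm_eq (multB x) (Bexp (x (inord 0)) (x (inord 1)) (x (inord 2)) (x (inord 3)) (x (inord 4)) (x (inord 5))).
Proof.
rewrite /multB; apply: perm_trans (perm_map _ triples_perm) _.
by rewrite /TL /=.
Qed.

Lemma pair_case (a0 a1 a2 a3 n m x0 x1 x2 x3 x4 x5 : int) :
  uniq [:: a0; a1; a2; a3; n - a0; n - a1; n - a2; n - a3] ->
  (forall u v w, u \in [:: a0; a1; a2; a3; n - a0; n - a1; n - a2; n - a3] -> v \in [:: a0; a1; a2; a3; n - a0; n - a1; n - a2; n - a3] -> w \in [:: a0; a1; a2; a3; n - a0; n - a1; n - a2; n - a3] -> u + v = 2 * w -> u = v) ->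
  perm_eq ([seq 2 * v + m | v <- [:: a0; a1; a2; a3; n - a0; n - a1; n - a2; n - a3]] ++ [:: a0+a1+m; a0+a2+m; a0+a3+m; a1+a2+m; a1+a3+m; a2+a3+m; 2*n-(a0+a1)+m; 2*n-(a0+a2)+m; 2*n-(a0+a3)+m; 2*n-(a1+a2)+m; 2*n-(a1+a3)+m; 2*n-(a2+a3)+m]) (Bexp x0 x1 x2 x3 x4 x5) ->
  forall p q : nat, (p < q)%N -> (q < 6)%N ->
  nth 0 [:: x0; x1; x2; x3; x4; x5] p = nth 0 [:: x0; x1; x2; x3; x4; x5] q -> False.
Proof.
move=> Hu Hap HP p q Hpq Hq.
case: p Hpq => [|[|[|[|[|[|p]]]]]] Hpq; case: q Hq Hpq => [|[|[|[|[|[|q]]]]]] // Hq Hpq /= Hx.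
- apply: (@core a0 a1 a2 a3 n m x0 x2 x3 x4 x5 Hu Hap); apply: (perm_trans HP).
  apply: (@perm_idx _ _ [:: 0;1;2;3;16;17;18;19;4;5;6;7;8;9;10;11;12;13;14;15]%N); first by [].
  rewrite /= -Hx; repeat (apply: cons_eq; first by ring); done.
- apply: (@core a0 a1 a2 a3 n m x0 x1 x3 x4 x5 Hu Hap); apply: (perm_trans HP).
  apply: (@perm_idx _ _ [:: 0;4;5;6;13;14;15;19;1;2;3;7;8;9;10;11;12;16;17;18]%N); first by [].
  rewrite /= -Hx; repeat (apply: cons_eq; first by ring); done.
- apply: (@core a0 a1 a2 a3 n m x0 x1 x2 x4 x5 Hu Hap); apply: (perm_trans HP).
  apply: (@perm_idx _ _ [:: 1;4;7;8;11;12;15;18;0;2;3;5;6;9;10;13;14;16;17;19]%N); first by [].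
  rewrite /= -Hx; repeat (apply: cons_eq; first by ring); done.
- apply: (@core a0 a1 a2 a3 n m x0 x1 x2 x3 x5 Hu Hap); apply: (perm_trans HP).
  apply: (@perm_idx _ _ [:: 2;5;7;9;10;12;14;17;0;1;3;4;6;8;11;13;15;16;18;19]%N); first by [].
  rewrite /= -Hx; repeat (apply: cons_eq; first by ring); done.
- apply: (@core a0 a1 a2 a3 n m x0 x1 x2 x3 x4 Hu Hap); apply: (perm_trans HP).
  apply: (@perm_idx _ _ [:: 3;6;8;9;10;11;13;16;0;1;2;4;5;7;12;14;15;17;18;19]%N); first by [].
  rewrite /= -Hx; repeat (apply: cons_eq; first by ring); done.
- apply: (@core a0 a1 a2 a3 n m x1 x0 x3 x4 x5 Hu Hap); apply: (perm_trans HP).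
  apply: (@perm_idx _ _ [:: 0;10;11;12;7;8;9;19;1;2;3;13;14;15;4;5;6;16;17;18]%N); first by [].
  rewrite /= -Hx; repeat (apply: cons_eq; first by ring); done.
- apply: (@core a0 a1 a2 a3 n m x1 x0 x2 x4 x5 Hu Hap); apply: (perm_trans HP).
  apply: (@perm_idx _ _ [:: 1;10;13;14;5;6;9;18;0;2;3;11;12;15;4;7;8;16;17;19]%N); first by [].
  rewrite /= -Hx; repeat (apply: cons_eq; first by ring); done.
- apply: (@core a0 a1 a2 a3 n m x1 x0 x2 x3 x5 Hu Hap); apply: (perm_trans HP).
  apply: (@perm_idx _ _ [:: 2;11;13;15;4;6;8;17;0;1;3;10;12;14;5;7;9;16;18;19]%N); first by [].
  rewrite /= -Hx; repeat (apply: cons_eq; first by ring); done.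
- apply: (@core a0 a1 a2 a3 n m x1 x0 x2 x3 x4 Hu Hap); apply: (perm_trans HP).
  apply: (@perm_idx _ _ [:: 3;12;14;15;4;5;7;16;0;1;2;10;11;13;6;8;9;17;18;19]%N); first by [].
  rewrite /= -Hx; repeat (apply: cons_eq; first by ring); done.
- apply: (@core a0 a1 a2 a3 n m x2 x0 x1 x4 x5 Hu Hap); apply: (perm_trans HP).
  apply: (@perm_idx _ _ [:: 4;10;16;17;2;3;9;15;0;5;6;11;12;18;1;7;8;13;14;19]%N); first by [].
  rewrite /= -Hx; repeat (apply: cons_eq; first by ring); done.
- apply: (@core a0 a1 a2 a3 n m x2 x0 x1 x3 x5 Hu Hap); apply: (perm_trans HP).
  apply: (@perm_idx _ _ [:: 5;11;16;18;1;3;8;14;0;4;6;10;12;17;2;7;9;13;15;19]%N); first by [].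
  rewrite /= -Hx; repeat (apply: cons_eq; first by ring); done.
- apply: (@core a0 a1 a2 a3 n m x2 x0 x1 x3 x4 Hu Hap); apply: (perm_trans HP).
  apply: (@perm_idx _ _ [:: 6;12;17;18;1;2;7;13;0;4;5;10;11;16;3;8;9;14;15;19]%N); first by [].
  rewrite /= -Hx; repeat (apply: cons_eq; first by ring); done.
- apply: (@core a0 a1 a2 a3 n m x3 x0 x1 x2 x5 Hu Hap); apply: (perm_trans HP).
  apply: (@perm_idx _ _ [:: 7;13;16;19;0;3;6;12;1;4;8;10;14;17;2;5;9;11;15;18]%N); first by [].
  rewrite /= -Hx; repeat (apply: cons_eq; first by ring); done.
- apply: (@core a0 a1 a2 a3 n m x3 x0 x1 x2 x4 Hu Hap); apply: (perm_trans HP).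
  apply: (@perm_idx _ _ [:: 8;14;17;19;0;2;5;11;1;4;7;10;13;16;3;6;9;12;15;18]%N); first by [].
  rewrite /= -Hx; repeat (apply: cons_eq; first by ring); done.
- apply: (@core a0 a1 a2 a3 n m x4 x0 x1 x2 x3 Hu Hap); apply: (perm_trans HP).
  apply: (@perm_idx _ _ [:: 9;15;18;19;0;1;4;10;2;5;7;11;13;16;3;6;8;12;14;17]%N); first by [].
  rewrite /= -Hx; repeat (apply: cons_eq; first by ring); done.
Qed.
Lemma nth_x6 (x : 'I_6 -> int) (i : 'I_6) :
  nth 0 [:: x (inord 0); x (inord 1); x (inord 2); x (inord 3); x (inord 4); x (inord 5)] i = x i.
Proof.
rewrite (_ : [:: x (inord 0); _; _; _; _; _] = map x (enum 'I_6)); last by rewrite enum6.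
by rewrite (nth_map ord0) ?size_enum_ord // nth_ord_enum.
Qed.

Theorem mainTheorem9 (a : 'I_4 -> int) (n m : int) (x : 'I_6 -> int) :
  uniq (eight a n) -> no3AP (eight a n) ->
  perm_eq (multA a n m) (multB x) ->
  injective x.
Proof.
move=> Hu H3 HP i j Hij; apply/eqP; apply/negPn/negP => Hne.
have Hap := @AP_of _ H3.
rewrite eight_eq in Hu Hap.
have A1 := multA_perm a n m; rewrite perm_sym in A1.
have HP' := perm_trans A1 (perm_trans HP (multB_perm x)).
case: (ssrnat.ltngtP (val i) (val j)) => Hc.
- apply: (@pair_case _ _ _ _ _ _ _ _ _ _ _ _ Hu Hap HP' _ _ Hc (ltn_ord j)).
  by rewrite !nth_x6.
- apply: (@pair_case _ _ _ _ _ _ _ _ _ _ _ _ Hu Hap HP' _ _ Hc (ltn_ord i)).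
  by rewrite !nth_x6 Hij.
- by move/eqP: Hne; apply; apply: val_inj.
Qed.
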